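(* Let $N\ge 2$ be an integer. For $k\in\mathbb{Z}$ let $D_k$ be the column vector of length $N$ whose $i$-th entry ($i=1,\dots,N$, from the top) is $p_{2(N-i)+1}(y,q^kz)$, and let $D'_k$ be the column vector whose $i$-th entry is $q^{2(N-i)+1}p_{2(N-i)+1}(y/q,q^kz)$. Then $$\det[D_{N-1},D_{N-2},\dots,D_1,D_0]=(q-1)^{\frac{N(N-1)}2}z^{\frac{N(N-1)}2}q^{\frac{(N-2)(N-1)N}6}\phi_N(y,z),$$ $$\det[D_{N-1},\dots,D_2,D_1,D'_0]=(-1)^{N-1}(q-1)^{\frac{N(N-1)}2}z^{\frac{(N-1)(N-2)}2}q^{\frac{N(N^2+5)}6}\phi_N(y/q,z),$$ $$\det[D_{N-1},\dots,D_2,D_1,D'_1]=(-1)^{N-1}(q-1)^{\frac{N(N-1)}2}z^{\frac{(N-1)(N-2)}2}q^{\frac{N(N^2+5)}6}(1+qz)\,\phi_N(y/q,z).$$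
   Context: $q$ is a fixed nonzero complex constant that is not a root of unity; $y,z$ are variables. For $k\in\mathbb{Z}$ the polynomials $p_k(y,z)$ are defined by the generating function $\sum_{n\ge 0}p_n(y,z)t^n=\frac{(-(1-q)t;q)_\infty}{((1-q)yt;q)_\infty((1-q)zt;q)_\infty}$, with $(a;q)_\infty=\prod_{i\ge0}(1-aq^i)$, and $p_k=0$ for $k<0$; equivalently $p_n(y,z)=(1-q)^n\sum_{a+b+c=n}\frac{y^a z^b q^{c(c-1)/2}}{(q;q)_a(q;q)_b(q;q)_c}$ with $(q;q)_m=\prod_{j=1}^m(1-q^j)$. For $N>0$, $\phi_N(y,z)=\det\big(p_{N-2i+j+1}(y,z)\big)_{i,j=1}^N$. *)

(* Defs.v *)
From HB Require Import structures.
From mathcomp Require Import all_boot all_order all_algebra.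
From mathcomp Require Import complex.
From mathcomp Require Import Rstruct.
Set Implicit Arguments. Unset Strict Implicit. Unset Printing Implicit Defensive.
Import Order.TTheory GRing.Theory Num.Theory.
Local Open Scope ring_scope.

Notation C := (complex Rdefinitions.R).

Definition qpoch (q : C) (m : nat) : C := \prod_(j < m) (1 - q ^+ j.+1).

Definition pnat (q : C) (n : nat) (y z : C) : C :=
  (1 - q) ^+ n *
  \sum_(a < n.+1) \sum_(b < (n - a).+1)
    let c := (n - a - b)%N in
    y ^+ a * z ^+ b * q ^+ ((c * (c - 1)) %/ 2)
      / (qpoch q a * qpoch q b * qpoch q c).

Definition p (q : C) (k : int) (y z : C) : C :=
  match k with
  | Posz n => pnat q n y z
  | Negz _ => 0
  end.

(* phi_N(y,z) = det (p_{N-2i+j+1}(y,z))_{i,j=1..N}; with 0-based i,j this is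
   p_{N - 2i + j}. *)
Definition phi (q : C) (N : nat) (y z : C) : C :=
  \det (\matrix_(i < N, j < N) p q (N%:Z - 2 * (i : nat)%:Z + (j : nat)%:Z) y z).

Definition Dent (q : C) (N : nat) (y z : C) (k : nat) (i : nat) : C :=
  pnat q (2 * (N - 1 - i)).+1 y (q ^+ k * z).

Definition Dent' (q : C) (N : nat) (y z : C) (k : nat) (i : nat) : C :=
  q ^+ (2 * (N - 1 - i)).+1 * pnat q (2 * (N - 1 - i)).+1 (y / q) (q ^+ k * z).

(* [D_{N-1}, D_{N-2}, ..., D_1, D_0]: column j (0-based) is D_{N-1-j} *)
Definition Dmat (q : C) (N : nat) (y z : C) : 'M[C]_N :=
  \matrix_(i < N, j < N) Dent q N y z (N - 1 - j) i.

Definition Dmat' (q : C) (N : nat) (y z : C) (k : nat) : 'M[C]_N :=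
  \matrix_(i < N, j < N)
    if (j : nat) == (N - 1)%N then Dent' q N y z k i
    else Dent q N y z (N - 1 - j) i.

(* Main.v *)
Require Import Defs.
From HB Require Import structures.
From mathcomp Require Import all_boot all_order all_algebra.
From mathcomp Require Import complex.
From mathcomp Require Import Rstruct.
From mathcomp Require Import ring lra zify.
Import Order.TTheory GRing.Theory Num.Theory.
Local Open Scope ring_scope.
Set Warnings "-notation-overridden,-ambiguous-paths".

Definition conv (f g : nat -> C) (n : nat) : C := \sum_(i < n.+1) f i * g (n - i)%N.
Definition shiftf (g : nat -> C) (m : nat) : C := if m is m'.+1 then g m' else 0.

Lemma conv_shift (f g1 g2 : nat -> C) (c : C) :
  (forall m, g2 m = g1 m + c * shiftf g1 m) ->
  forall n, conv f g2 n = conv f g1 n + c * shiftf (conv f g1) n.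
Proof.
move=> H n; rewrite /conv.
under eq_bigr => i _ do rewrite H mulrDr.
rewrite big_split /=; congr (_ + _).
case: n => [|n] /=.
  by rewrite big_ord1 /= !mulr0.
rewrite big_ord_recr /= subnn /= !mulr0 addr0 mulr_sumr.
apply: eq_bigr => i _; rewrite subSn; last by rewrite -ltnS.
by rewrite /= mulrCA.
Qed.

Lemma conv_comm f g n : conv f g n = conv g f n.
Proof.
rewrite /conv (reindex_inj rev_ord_inj) /=.
apply: eq_bigr => i _; rewrite subKn; last by rewrite -ltnS.
by rewrite mulrC subSS.
Qed.

Lemma conv_scale (r : C) f g n :
  conv (fun i => r ^+ i * f i) (fun i => r ^+ i * g i) n = r ^+ n * conv f g n.
Proof.
rewrite /conv mulr_sumr; apply: eq_bigr => i _.
have hi : (i <= n)%N by rewrite -ltnS.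
rewrite (_ : r ^+ n = r ^+ i * r ^+ (n - i)); first ring.
by rewrite -exprD subnKC.
Qed.

Definition Aco (q y : C) (a : nat) : C := y ^+ a / qpoch q a.
Definition Wc (q : C) (c : nat) : C := q ^+ ((c * (c - 1)) %/ 2) / qpoch q c.

Lemma pnat_conv q n y z :
  Defs.pnat q n y z = (1 - q) ^+ n * conv (Aco q y) (conv (Aco q z) (Wc q)) n.
Proof.
rewrite /Defs.pnat /conv; congr (_ * _); apply: eq_bigr => a _.
rewrite mulr_sumr; apply: eq_bigr => b _ /=.
rewrite /Aco /Wc !invfM; ring.
Qed.

Lemma qpochS q m : qpoch q m.+1 = qpoch q m * (1 - q ^+ m.+1).
Proof. by rewrite /qpoch big_ord_recr. Qed.

Lemma qpoch_neq0 q (hq : forall n : nat, (0 < n)%N -> q ^+ n != 1) m :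
  qpoch q m != 0.
Proof.
apply/prodf_neq0 => i _; rewrite subr_eq0 eq_sym; exact: hq.
Qed.

Lemma tri_exp c : ((c.+1 * (c.+1 - 1)) %/ 2 = (c * (c - 1)) %/ 2 + c)%N.
Proof.
rewrite subSS subn0 (_ : (c.+1 * c = c * (c - 1) + c * 2)%N).
  by rewrite addnC divnMDl // addnC.
case: c => [|c] //=; rewrite subSS subn0; lia.
Qed.

Lemma Aco_shift q (hq : forall n : nat, (0 < n)%N -> q ^+ n != 1) w b :
  Aco q (q * w) b = Aco q w b + (- w) * shiftf (Aco q w) b.
Proof.
case: b => [|b]; first by rewrite /= mulr0 addr0 /Aco !expr0.
rewrite /Aco /= qpochS.
have h1 := qpoch_neq0 q hq b.
have h2 : 1 - q ^+ b.+1 != 0 by rewrite subr_eq0 eq_sym hq.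
rewrite exprMn !exprS; field.
by rewrite h1 -exprS.
Qed.

Lemma Wc_shift q (hq : forall n : nat, (0 < n)%N -> q ^+ n != 1) m :
  Wc q m = (fun c => q ^+ c * Wc q c) m + 1 * shiftf (fun c => q ^+ c * Wc q c) m.
Proof.
case: m => [|c]; first by rewrite /= mulr0 addr0 expr0 mul1r.
rewrite /Wc /= qpochS tri_exp.
have h1 := qpoch_neq0 q hq c.
have h2 : 1 - q ^+ c.+1 != 0 by rewrite subr_eq0 eq_sym hq.
rewrite !exprD !exprS; field.
by rewrite h1 -exprS.
Qed.

Lemma shiftf_ext f g m : (forall k, f k = g k) -> shiftf f m = shiftf g m.
Proof. by move=> H; case: m => //= k; rewrite H. Qed.

Lemma eq_conv f1 f2 g1 g2 n : (forall i, f1 i = f2 i) -> (forall i, g1 i = g2 i) ->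
  conv f1 g1 n = conv f2 g2 n.
Proof. by move=> H1 H2; apply: eq_bigr => i _; rewrite H1 H2. Qed.

Lemma L1n q (hq : forall n : nat, (0 < n)%N -> q ^+ n != 1) n y w :
  Defs.pnat q n y (q * w) =
  Defs.pnat q n y w - (1 - q) * w * shiftf (fun k => Defs.pnat q k y w) n.
Proof.
have HE : forall m, conv (Aco q (q * w)) (Wc q) m =
   conv (Aco q w) (Wc q) m + (- w) * shiftf (conv (Aco q w) (Wc q)) m.
  move=> m; rewrite conv_comm (conv_shift _ _ _ (- w) (fun k => Aco_shift q hq w k)).
  rewrite conv_comm; congr (_ + _ * _); apply: shiftf_ext => k; exact: conv_comm.
rewrite !pnat_conv (conv_shift _ _ _ (- w) HE).
case: n => [|n] /=; first by rewrite !mulr0 addr0 subr0.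
rewrite pnat_conv exprS; ring.
Qed.

Lemma L2n q (hq : forall n : nat, (0 < n)%N -> q ^+ n != 1) n y w :
  Defs.pnat q n (q * y) (q * w) =
  q ^+ n * Defs.pnat q n y w + (1 - q) * shiftf (fun k => q ^+ k * Defs.pnat q k y w) n.
Proof.
set W' := fun c => q ^+ c * Wc q c.
set H := conv (Aco q (q * w)) W'.
have HX : forall k, q ^+ k * Defs.pnat q k y w = (1 - q) ^+ k * conv (Aco q (q * y)) H k.
  move=> k; rewrite pnat_conv mulrCA -conv_scale; congr (_ * _).
  apply: eq_conv => i; first by rewrite /Aco exprMn mulrA.
  rewrite -conv_scale; apply: eq_conv => j //; by rewrite /Aco exprMn mulrA.
have HE : forall m, conv (Aco q (q * w)) (Wc q) m = H m + 1 * shiftf H m.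
  by move=> m; rewrite /H (conv_shift _ _ _ 1 (fun k => Wc_shift q hq k)).
rewrite pnat_conv (conv_shift _ _ _ 1 HE) HX.
case: n => [|n] /=; first by rewrite !mulr0 !addr0.
rewrite HX exprS; ring.
Qed.

Lemma p_neg q (n : int) y z : (n < 0)%R -> p q n y z = 0.
Proof. by case: n. Qed.

Lemma intS1 (k : nat) : (k.+1%:Z - 1 = k%:Z)%R.
Proof. lia. Qed.

Lemma L1z q (hq : forall n : nat, (0 < n)%N -> q ^+ n != 1) (n : int) y w :
  p q n y (q * w) = p q n y w - (1 - q) * w * p q (n - 1) y w.
Proof.
case: n => [k|k]; last first.
  rewrite !p_neg ?mulr0 ?subr0 //; lia.
rewrite /= L1n //; case: k => [|k] /=.
  done.
by rewrite subn1.
Qed.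

Definition Xz (q y w : C) (n : int) : C :=
  match n with Posz k => q ^+ k * Defs.pnat q k (y / q) w | Negz _ => 0 end.

Lemma Xz_neg q y w (n : int) : (n < 0)%R -> Xz q y w n = 0.
Proof. by case: n. Qed.

Lemma L2z q (hq0 : q != 0) (hq : forall n : nat, (0 < n)%N -> q ^+ n != 1) (n : int) y w :
  p q n y (q * w) = Xz q y w n + (1 - q) * Xz q y w (n - 1).
Proof.
case: n => [k|k]; last first.
  rewrite p_neg // Xz_neg // Xz_neg ?mulr0 ?addr0 //; lia.
rewrite /=; transitivity (Defs.pnat q k (q * (y / q)) (q * w)).
  by rewrite [q * (y / q)]mulrC divfK.
rewrite L2n //; case: k => [|k] /=.
  done.
by rewrite subn1.
Qed.

Lemma L3z q (hq : forall n : nat, (0 < n)%N -> q ^+ n != 1) (n : int) y w :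
  Xz q y (q * w) n = Xz q y w n - (1 - q) * q * w * Xz q y w (n - 1).
Proof.
case: n => [k|k]; last first.
  rewrite !Xz_neg ?mulr0 ?subr0 //; lia.
rewrite /= L1n //; case: k => [|k] /=.
  by rewrite !mulr0 !subr0.
rewrite subSS subn0 exprS; ring.
Qed.

Fixpoint co (c a0 : nat -> C) (m : nat) : nat -> C :=
  match m with
  | 0 => a0
  | m'.+1 => fun k => co c a0 m' k - c m' * shiftf (co c a0 m') k
  end.

Lemma co_supp c a0 d0 : (forall k, (d0 < k)%N -> a0 k = 0) ->
  forall m k, (m + d0 < k)%N -> co c a0 m k = 0.
Proof.
move=> Ha; elim=> [|m IH] k hk /=; first exact: Ha.
rewrite IH; last by lia.
case: k hk => [|k] hk /=; first by rewrite mulr0 subr0.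
by rewrite IH ?mulr0 ?subr0 //; lia.
Qed.

Lemma co_diag c a0 d0 : (forall k, (d0 < k)%N -> a0 k = 0) ->
  forall m, co c a0 m (m + d0) = a0 d0 * \prod_(i < m) (- c i).
Proof.
move=> Ha; elim=> [|m IH] /=; first by rewrite big_ord0 mulr1.
rewrite (co_supp _ _ _ Ha); last by lia.
rewrite IH big_ord_recr /=; ring.
Qed.

Lemma co_expand (f : int -> C) (F : nat -> int -> C) (c a0 : nat -> C) (d0 K : nat) :
  (forall n, F 0%N n = \sum_(k < K) a0 k * f (n - k%:Z)) ->
  (forall m n, F m.+1 n = F m n - c m * F m (n - 1)) ->
  (forall k, (d0 < k)%N -> a0 k = 0) ->
  forall m, (m + d0 < K)%N -> forall n, F m n = \sum_(k < K) co c a0 m k * f (n - k%:Z).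
Proof.
move=> H0 HF Ha; elim=> [|m IH] hm n; first exact: H0.
rewrite HF !IH; try lia.
rewrite /=.
under [RHS]eq_bigr => k _ do rewrite mulrBl.
rewrite sumrB; congr (_ - _).
transitivity (c m * \sum_(k < K) shiftf (co c a0 m) k * f (n - k%:Z)); last first.
  by rewrite mulr_sumr; apply: eq_bigr => k _; rewrite mulrA.
congr (_ * _).
case: K hm {IH H0} => [|K] hm; first by lia.
rewrite [LHS]big_ord_recr [RHS]big_ord_recl /= mul0r add0r.
rewrite (co_supp _ _ _ Ha); last by lia.
rewrite mul0r addr0; apply: eq_bigr => i _.
congr (_ * f _); rewrite /bump /=; lia.
Qed.

Lemma det_expand N (A T : 'M[C]_N) : (forall i j : 'I_N, (i < j)%N -> T i j = 0) ->
  \det (A *m T) = \det A * \prod_i T i i.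
Proof. by move=> H; rewrite det_mulmx (@det_trig _ _ T) //; apply/is_trig_mxP. Qed.

Lemma mx_expand N (M : 'M[C]_N) (f : int -> C) (cf : 'I_N -> nat -> C) :
  (forall i j : 'I_N, M i j = \sum_(k < N) cf j k * f (((2 * (N - 1 - i)).+1)%:Z - k%:Z)) ->
  M = (\matrix_(i < N, j < N) f (N%:Z - 2 * (i : nat)%:Z + (j : nat)%:Z))
      *m (\matrix_(i < N, j < N) cf j (N - 1 - i)%N).
Proof.
move=> H; apply/matrixP => i j; rewrite !mxE H (reindex_inj rev_ord_inj) /=.
apply: eq_bigr => k _; rewrite !mxE mulrC /=.
have hk := ltn_ord k; have hi := ltn_ord i.
rewrite (_ : (N - 1 - k = N - k.+1)%N); last by lia.
congr (f _ * _); lia.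
Qed.

Lemma C2E n : ('C(n, 2) * 2 = n * (n - 1))%N.
Proof. rewrite bin_ffact !ffactnS ffactn0 muln1 -subn1. lia. Qed.

Lemma C3E n : ('C(n, 3) * 6 = n * (n - 1) * (n - 2))%N.
Proof.
have h := bin_ffact n 3.
rewrite (_ : 3`! = 6)%N // in h.
by rewrite h !ffactnS ffactn0 muln1 -!subn1 -subnDA mulnA.
Qed.

Lemma e2 n : ((n * (n - 1)) %/ 2 = 'C(n, 2))%N.
Proof. by rewrite -C2E mulnK. Qed.

Lemma e3 n : (((n - 2) * (n - 1) * n) %/ 6 = 'C(n, 3))%N.
Proof.
rewrite (_ : ((n - 2) * (n - 1) * n = 'C(n, 3) * 6)%N) ?mulnK // C3E.
by rewrite [RHS]mulnC [in RHS](mulnC n) mulnA.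
Qed.


Lemma e2' n : (((n - 1) * (n - 2)) %/ 2 = 'C(n - 1, 2))%N.
Proof. by rewrite -e2 -subnDA. Qed.

Lemma e4 n : ((n * (n ^ 2 + 5)) %/ 6 = 'C(n, 3) + 'C(n.+1, 2))%N.
Proof.
rewrite (_ : (n * (n ^ 2 + 5) = ('C(n, 3) + 'C(n.+1, 2)) * 6)%N) ?mulnK //.
have h3 := C3E n; have h2 := C2E n.+1.
rewrite mulnDl h3 (_ : 'C(n.+1, 2) * 6 = 'C(n.+1, 2) * 2 * 3)%N; last by rewrite -mulnA.
rewrite h2; case: n {h3 h2} => [|[|n]] //.
rewrite !subSS !subn0 ?subn1 /=.
ring.
Qed.

Definition d0f (k : nat) : C := (k == 0%N)%:R.
Definition c1 (q z : C) (m : nat) : C := (1 - q) * (q ^+ m * z).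

Lemma d0f_supp k : (0 < k)%N -> d0f k = 0.
Proof. by case: k. Qed.

Lemma sum_d0f N (g : nat -> C) : (0 < N)%N -> \sum_(k < N) d0f k * g k = g 0%N.
Proof.
case: N => [|N] // _; rewrite big_ord_recl /= mul1r big1 ?addr0 // => i _.
by rewrite /d0f /= mul0r.
Qed.

Lemma prod_inner q w m :
  \prod_(i < m) (- c1 q w i) = ((q - 1) * w) ^+ m * q ^+ 'C(m, 2).
Proof.
elim: m => [|m IH]; first by rewrite big_ord0 bin_small // !expr0 mulr1.
rewrite big_ord_recr /= IH binS bin1 exprS exprD /c1; ring.
Qed.

Lemma prodtri q w M :
  \prod_(j < M) \prod_(i < (M - 1 - j)%N) (- c1 q w i)
  = ((q - 1) * w) ^+ 'C(M, 2) * q ^+ 'C(M, 3).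
Proof.
rewrite (reindex_inj rev_ord_inj) /=.
rewrite (eq_bigr (fun j : 'I_M => ((q - 1) * w) ^+ j * q ^+ 'C(j, 2))); last first.
  move=> j _; rewrite (_ : (M - 1 - (M - j.+1) = j)%N) ?prod_inner //.
  by have := ltn_ord j; lia.
elim: M => [|M IH]; first by rewrite big_ord0 !bin_small // !expr0 mulr1.
rewrite big_ord_recr /= IH !binS bin1 !exprD; ring.
Qed.

Definition PhiM (q : C) (N : nat) (y z : C) : 'M[C]_N :=
  \matrix_(i < N, j < N) p q (N%:Z - 2 * (i : nat)%:Z + (j : nat)%:Z) y z.

Lemma phiE q N y z : phi q N y z = \det (PhiM q N y z).
Proof. by []. Qed.

Lemma Dmat_eq q (hq : forall n : nat, (0 < n)%N -> q ^+ n != 1) N y z : (0 < N)%N ->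
  Dmat q N y z = PhiM q N y z *m
    \matrix_(i < N, j < N) co (c1 q z) d0f (N - 1 - j)%N (N - 1 - i)%N.
Proof.
move=> hN; apply: (@mx_expand N _ (fun n => p q n y z) (fun j k => co (c1 q z) d0f (N - 1 - j) k)) => i j; rewrite /Dmat mxE /Dent.
change (Defs.pnat q ((2 * (N - 1 - i)).+1) y (q ^+ (N - 1 - j) * z))
  with (p q ((2 * (N - 1 - i)).+1)%:Z y (q ^+ (N - 1 - j) * z)).
have hm : (N - 1 - j + 0 < N)%N by have := ltn_ord j; lia.
have H0 : forall n : int, (fun m n => p q n y (q ^+ m * z)) 0%N n
   = \sum_(k < N) d0f k * (fun n => p q n y z) (n - k%:Z).
  by move=> n /=; rewrite expr0 mul1r (sum_d0f _ (fun k : nat => p q (n - k%:Z) y z)) // subr0.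
have HF : forall m n, (fun m n => p q n y (q ^+ m * z)) m.+1 n =
   (fun m n => p q n y (q ^+ m * z)) m n - c1 q z m * (fun m n => p q n y (q ^+ m * z)) m (n - 1).
  by move=> m n /=; rewrite exprS -mulrA L1z.
exact: (co_expand (fun n => p q n y z) (fun m n => p q n y (q ^+ m * z)) (c1 q z) d0f 0 N H0 HF d0f_supp _ hm).
Qed.

Lemma part1 q (hq : forall n : nat, (0 < n)%N -> q ^+ n != 1) N y z : (0 < N)%N ->
  \det (Dmat q N y z) = ((q - 1) * z) ^+ 'C(N, 2) * q ^+ 'C(N, 3) * phi q N y z.
Proof.
move=> hN; rewrite Dmat_eq // det_expand; last first.
  move=> i j hij; rewrite mxE (co_supp _ _ _ d0f_supp) //.
  by have := ltn_ord j; have := ltn_ord i; lia.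
rewrite phiE mulrC; congr (_ * _).
rewrite -prodtri; apply: eq_bigr => i _; rewrite mxE.
rewrite -[X in co _ _ _ X](addn0 (N - 1 - i)%N) (co_diag _ _ _ d0f_supp) /d0f /= mul1r.
done.
Qed.

Lemma Xz_scale q y w (n : int) (u v : nat) : u%:Z + n = v%:Z ->
  q ^+ u * Xz q y w n = q ^+ v * p q n (y / q) w.
Proof.
case: n => [k|k] /= h; last by rewrite !mulr0.
have -> : v = (u + k)%N by move/eqP: h; rewrite -PoszD eqz_nat => /eqP <-.
by rewrite exprD mulrA.
Qed.

Lemma sum_rev2 N : (\sum_(i < N) (2 * N - 2 * i) = 'C(N.+1, 2) * 2)%N.
Proof.
rewrite (reindex_inj rev_ord_inj) /=.
rewrite (eq_bigr (fun i : 'I_N => 2 * i.+1)%N); last first.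
  by move=> i _; have := ltn_ord i; lia.
elim: N => [|N IH]; first by rewrite big_ord0.
rewrite big_ord_recr /= IH [in RHS]binS bin1; lia.
Qed.

Lemma sum_id N : (\sum_(i < N) i = 'C(N, 2))%N.
Proof. by rewrite -bin2_sum big_mkord. Qed.

Lemma detXM q (hq0 : q != 0) N y z :
  \det (\matrix_(i < N, j < N) Xz q y z (N%:Z - 2 * (i : nat)%:Z + (j : nat)%:Z))
  = q ^+ 'C(N.+1, 2) * phi q N (y / q) z.
Proof.
set XM := \matrix_(i < N, j < N) _.
have key : q ^+ N *: XM = diag_mx (\row_(i < N) q ^+ (2 * N - 2 * i)%N) *m
    PhiM q N (y / q) z *m diag_mx (\row_(j < N) q ^+ (j : nat)).
  apply/matrixP => i j; rewrite mul_mx_diag mul_diag_mx !mxE.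
  rewrite (Xz_scale _ _ _ _ N (2 * N - 2 * i + j)%N); last first.
    by have := ltn_ord i; lia.
  by rewrite exprD; ring.
have := congr1 determinant key.
rewrite detZ !det_mulmx !det_diag -phiE.
under eq_bigr => i _ do rewrite mxE.
under [X in _ = _ * _ * X]eq_bigr => i _ do rewrite mxE.
rewrite !prodrXr sum_rev2 sum_id -exprM => h.
apply: (mulfI (expf_neq0 (N * N)%N hq0)).
rewrite h mulrAC -exprD mulrA -exprD; congr (q ^+ _ * _).
case: N {XM key h} => [|M] //.
have := C2E M.+1; rewrite binS bin1 subSS subn0 [in 'C(M.+2, 2)]binS bin1.
rewrite (binS M 1) bin1 mulnS; lia.
Qed.

Definition a1f (q : C) (k : nat) : C :=
  if k == 0%N then 1 else if k == 1%N then 1 - q else 0.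

Lemma a1f_supp q k : (1 < k)%N -> a1f q k = 0.
Proof. by case: k => [|[|k]]. Qed.

Definition cf2 (q z : C) (N : nat) (j : nat) (k : nat) : C :=
  if j == (N - 1)%N then d0f k else co (c1 q (q * z)) (a1f q) (N - 2 - j)%N k.

Lemma Dmat'_eq q (hq0 : q != 0) (hq : forall n : nat, (0 < n)%N -> q ^+ n != 1) N y z :
  (2 <= N)%N ->
  Dmat' q N y z 0 = (\matrix_(i < N, j < N) Xz q y z (N%:Z - 2 * (i : nat)%:Z + (j : nat)%:Z)) *m
    \matrix_(i < N, j < N) cf2 q z N j (N - 1 - i)%N.
Proof.
move=> hN.
apply: (@mx_expand N _ (fun n => Xz q y z n) (fun j k => cf2 q z N j k)) => i j.
rewrite /Dmat' mxE /cf2.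
case: eqP => hj.
  rewrite /Dent' expr0 mul1r.
  change (q ^+ (2 * (N - 1 - i)).+1 * Defs.pnat q (2 * (N - 1 - i)).+1 (y / q) z)
    with (Xz q y z ((2 * (N - 1 - i)).+1)%:Z).
  by rewrite (sum_d0f _ (fun k : nat => Xz q y z (((2 * (N - 1 - i)).+1)%:Z - k%:Z))) ?subr0 //; lia.
rewrite /Dent.
have hjN : (j < N - 1)%N by have := ltn_ord j; lia.
rewrite (_ : q ^+ (N - 1 - j) * z = q ^+ (N - 2 - j) * (q * z)); last first.
  by rewrite mulrA -exprSr; congr (_ ^+ _ * _); lia.
change (Defs.pnat q ((2 * (N - 1 - i)).+1) y (q ^+ (N - 2 - j) * (q * z)))
  with (p q ((2 * (N - 1 - i)).+1)%:Z y (q ^+ (N - 2 - j) * (q * z))).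
have hm : (N - 2 - j + 1 < N)%N by lia.
have H0 : forall n : int, (fun m n => p q n y (q ^+ m * (q * z))) 0%N n
   = \sum_(k < N) a1f q k * (fun n => Xz q y z n) (n - k%:Z).
  move=> n /=; rewrite expr0 mul1r L2z //.
  case: N hN {i j hj hjN hm} => [|[|N]] // _.
  rewrite !big_ord_recl big1 ?addr0 /=; last by move=> k _; rewrite /a1f /= mul0r.
  by rewrite /a1f /bump /= mul1r.
have HF : forall m n, (fun m n => p q n y (q ^+ m * (q * z))) m.+1 n =
   (fun m n => p q n y (q ^+ m * (q * z))) m n
   - c1 q (q * z) m * (fun m n => p q n y (q ^+ m * (q * z))) m (n - 1).
  by move=> m n /=; rewrite exprS -mulrA L1z.
exact: (co_expand (fun n => Xz q y z n) (fun m n => p q n y (q ^+ m * (q * z)))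
   (c1 q (q * z)) (a1f q) 1 N H0 HF (a1f_supp q) _ hm).
Qed.

Lemma part2 q (hq0 : q != 0) (hq : forall n : nat, (0 < n)%N -> q ^+ n != 1) N y z :
  (2 <= N)%N ->
  \det (Dmat' q N y z 0) = (q ^+ 'C(N.+1, 2) * phi q N (y / q) z) *
    ((1 - q) ^+ (N - 1) * (((q - 1) * (q * z)) ^+ 'C(N - 1, 2) * q ^+ 'C(N - 1, 3))).
Proof.
move=> hN; rewrite Dmat'_eq // det_expand; last first.
  move=> i j hij; rewrite mxE /cf2; have := ltn_ord j; case: eqP => hj hjN.
    by rewrite d0f_supp //; lia.
  by rewrite (co_supp _ _ _ (a1f_supp q)) //; lia.
rewrite detXM //; congr (_ * _).
case: N hN => [|M] // hM.
rewrite big_ord_recr /= mxE /cf2 /= subn1 /= eqxx subnn /d0f /= mulr1.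
rewrite -prodtri (_ : (1 - q) ^+ M = \prod_(j < M) (1 - q)); last first.
  by rewrite prodr_const card_ord.
rewrite -big_split /=.
apply: eq_bigr => j _; rewrite mxE /=.
have hj := ltn_ord j.
rewrite (_ : ((j : nat) == M) = false); last by apply/eqP; lia.
rewrite (_ : (M - j = (M.+1 - 2 - j) + 1)%N); last by lia.
rewrite (co_diag _ _ _ (a1f_supp q)) /a1f /=.
by rewrite (_ : (M.+1 - 2 - j = M - 1 - j)%N) //; lia.
Qed.

Definition Umx (q z : C) (N : nat) : 'M[C]_N :=
  \matrix_(k < N, j < N) if (j : nat) == (N - 1)%N then
     (if (k : nat) == (N - 1)%N then 1 + q * z
      else if (k : nat) == (N - 2)%N then - (q * z) else 0)
   else ((k : nat) == j)%:R.

Lemma detU q z N : (0 < N)%N -> \det (Umx q z N) = 1 + q * z.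
Proof.
move=> hN; rewrite -det_tr det_trig; last first.
  apply/is_trig_mxP => i j hij; rewrite !mxE.
  have := ltn_ord j; case: eqP => hi hj; first by lia.
  by rewrite (_ : ((j : nat) == i) = false) //; apply/eqP; lia.
case: N hN => [|M] // _.
rewrite big_ord_recr /= !mxE /= subn1 /= eqxx big1 ?mul1r // => i _.
rewrite !mxE /= eqxx; have := ltn_ord i.
by case: eqP => // hi; lia.
Qed.

Lemma Dent'1 q (hq0 : q != 0) (hq : forall n : nat, (0 < n)%N -> q ^+ n != 1) N y z i :
  Dent' q N y z 1 i = (1 + q * z) * Dent' q N y z 0 i - q * z * Dent q N y z 1 i.
Proof.
rewrite /Dent' /Dent expr1 expr0 mul1r.
change (q ^+ (2 * (N - 1 - i)).+1 * Defs.pnat q (2 * (N - 1 - i)).+1 (y / q) (q * z))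
  with (Xz q y (q * z) ((2 * (N - 1 - i)).+1)%:Z).
change (q ^+ (2 * (N - 1 - i)).+1 * Defs.pnat q (2 * (N - 1 - i)).+1 (y / q) z)
  with (Xz q y z ((2 * (N - 1 - i)).+1)%:Z).
change (Defs.pnat q ((2 * (N - 1 - i)).+1) y (q * z))
  with (p q ((2 * (N - 1 - i)).+1)%:Z y (q * z)).
rewrite L3z // L2z //; ring.
Qed.

Lemma Dmat'1_eq q (hq0 : q != 0) (hq : forall n : nat, (0 < n)%N -> q ^+ n != 1) N y z :
  (2 <= N)%N -> Dmat' q N y z 1 = Dmat' q N y z 0 *m Umx q z N.
Proof.
case: N => [|[|M]] // _; apply/matrixP => i j; rewrite !mxE.
case: eqP => hj.
  rewrite big_ord_recr big_ord_recr /= big1 ?add0r; last first.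
    move=> k _; have hk := ltn_ord k; rewrite !mxE hj /=.
    by repeat (case: eqP => /= ?; try lia); rewrite ?mulr0.
  rewrite !mxE hj !subn1 subn2 /= eqxx /=.
  rewrite eqxx Dent'1 // (_ : (M.+1 - M = 1)%N); last by lia.
  rewrite (_ : (M == M.+1) = false); last by apply/eqP; lia.
  ring.
rewrite (bigD1 j) //= !mxE (introF eqP hj) eqxx mulr1 big1 ?addr0 //.
move=> k hk; rewrite !mxE (introF eqP hj) /=.
rewrite (_ : ((k : nat) == j) = false) ?mulr0 //.
by apply/negbTE; move: hk; apply: contra => /eqP h; apply/eqP/val_inj.
Qed.

Theorem lemma2 (q : C) (hq0 : q != 0)
    (hq : forall n : nat, (0 < n)%N -> q ^+ n != 1)
    (N : nat) (hN : (2 <= N)%N) (y z : C) :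
  [/\ \det (Dmat q N y z)
        = (q - 1) ^+ ((N * (N - 1)) %/ 2) * z ^+ ((N * (N - 1)) %/ 2)
          * q ^+ (((N - 2) * (N - 1) * N) %/ 6) * phi q N y z,
      \det (Dmat' q N y z 0)
        = (-1) ^+ (N - 1) * (q - 1) ^+ ((N * (N - 1)) %/ 2)
          * z ^+ (((N - 1) * (N - 2)) %/ 2)
          * q ^+ ((N * (N ^ 2 + 5)) %/ 6) * phi q N (y / q) z
    & \det (Dmat' q N y z 1)
        = (-1) ^+ (N - 1) * (q - 1) ^+ ((N * (N - 1)) %/ 2)
          * z ^+ (((N - 1) * (N - 2)) %/ 2)
          * q ^+ ((N * (N ^ 2 + 5)) %/ 6) * (1 + q * z) * phi q N (y / q) z].
Proof.
have h2 : \det (Dmat' q N y z 0)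
        = (-1) ^+ (N - 1) * (q - 1) ^+ ((N * (N - 1)) %/ 2)
          * z ^+ (((N - 1) * (N - 2)) %/ 2)
          * q ^+ ((N * (N ^ 2 + 5)) %/ 6) * phi q N (y / q) z.
  rewrite part2 // e2 e2' e4.
  case: N hN => [|M] // hM; rewrite subSS subn0.
  rewrite (binS M 1) bin1 (binS M 2) -opprB (exprNn (q - 1)) !exprMn !exprD; ring.
split => //.
- by rewrite part1 ?e2 ?e3 ?exprMn //; lia.
- by rewrite Dmat'1_eq // det_mulmx detU ?h2; [ring | lia].
Qed.
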